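(* Let $1\le j\le d$ and let $\bm{x}_1,\dots,\bm{x}_{j+1}\in\mathbb{R}^d$ be affinely independent points (the vertices of a nondegenerate $j$-simplex). Let $d_{st}^2=\|\bm{x}_s-\bm{x}_t\|^2$, and let $\hat{B}$ be the $(j+2)\times(j+2)$ Cayley–Menger matrix $$\hat{B}=\begin{bmatrix}0 & 1 & 1 & \cdots & 1\\ 1 & 0 & d_{12}^2 & \cdots & d_{1,j+1}^2\\ 1 & d_{21}^2 & 0 & \cdots & d_{2,j+1}^2\\ \vdots & \vdots & \vdots & \ddots & \vdots\\ 1 & d_{j+1,1}^2 & d_{j+1,2}^2 & \cdots & 0\end{bmatrix}.$$ Let $\gamma=j!\,C$, where $C=\sqrt{\frac{(-1)^{j+1}}{2^j (j!)^2}\det(\hat{B})}$ is the $j$-dimensional content of the simplex. Then for each $p\in\{1,\dots,j+1\}$, $$\frac{\partial \gamma}{\partial \bm{x}_p}=\frac{(-1)^{j+1}/2^j}{\gamma}\sum_{\substack{m=1\\ m\neq p}}^{j+1}A_{pm}\,\bm{D}_{pm},$$ where $\bm{D}_{pm}=2(\bm{x}_p-\bm{x}_m)$ and $A_{pm}$ is the entry in the $(p+1)$-th row and $(m+1)$-th column of the adjugate matrix $\mathrm{adj}(\hat{B})$.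
   Context: $\gamma$ is called the content distortion factor: the ratio of the content (volume) of the $j$-simplex to the content $1/j!$ of the unit orthogonal $j$-simplex. Rows and columns of $\hat B$ are indexed $1,\dots,j+2$, with the first row/column being the border of ones, and row/column $s+1$ corresponding to vertex $\bm{x}_s$. The derivative with respect to $\bm{x}_p\in\mathbb{R}^d$ is the gradient vector in $\mathbb{R}^d$. *)

(* Defs.v *)
From HB Require Import structures.
From mathcomp Require Import all_boot all_order all_algebra.
From mathcomp Require Import all_classical all_reals all_analysis.
Set Implicit Arguments. Unset Strict Implicit. Unset Printing Implicit Defensive.
Import Order.TTheory GRing.Theory Num.Theory.
Import numFieldNormedType.Exports.
Local Open Scope ring_scope.

(* Points x_1..x_{j+1} in R^d are x : 'I_j.+1 -> 'rV[R]_d (0-based indices). *)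

Definition sqdist (R : realType) (d n : nat) (x : 'I_n -> 'rV[R]_d) (s t : 'I_n) : R :=
  \sum_(k < d) (x s 0 k - x t 0 k) ^+ 2.

Definition affinely_independent (R : realType) (d j : nat) (x : 'I_j.+1 -> 'rV[R]_d) : bool :=
  row_free (\matrix_(i < j) (x (lift ord0 i) - x ord0)).

(* Cayley-Menger matrix (size j+2): index 0 is the border, index (lift ord0 s)
   corresponds to vertex x_s. *)
Definition cm_matrix (R : realType) (d j : nat) (x : 'I_j.+1 -> 'rV[R]_d) : 'M[R]_j.+2 :=
  \matrix_(a, b)
    match unlift ord0 a, unlift ord0 b with
    | Some s, Some t => sqdist x s t
    | None, None => 0
    | _, _ => 1
    end.

Definition content (R : realType) (d j : nat) (x : 'I_j.+1 -> 'rV[R]_d) : R :=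
  Num.sqrt ((-1) ^+ j.+1 / (2 ^+ j * (j`!)%:R ^+ 2) * \det (cm_matrix x)).

Definition gamma_cdf (R : realType) (d j : nat) (x : 'I_j.+1 -> 'rV[R]_d) : R :=
  (j`!)%:R * content x.

Definition upd_vertex (R : realType) (d n : nat) (x : 'I_n -> 'rV[R]_d) (p : 'I_n)
  (y : 'rV[R]_d) : 'I_n -> 'rV[R]_d :=
  fun s => if s == p then y else x s.

(* Main.v *)
Require Import Defs.
From HB Require Import structures.
From mathcomp Require Import all_boot all_order all_algebra.
From mathcomp Require Import all_classical all_reals all_analysis.
From mathcomp Require Import fingroup perm lra ring.
Set Implicit Arguments. Unset Strict Implicit. Unset Printing Implicit Defensive.
Import Order.TTheory GRing.Theory Num.Theory.
Import numFieldNormedType.Exports.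
Local Open Scope ring_scope.


Lemma sqsum_pos (R : realType) n (u : 'rV[R]_n) : u != 0 -> 0 < \sum_k u 0 k ^+ 2.
Proof.
move=> un0; rewrite lt_def sumr_ge0 ?andbT; last by move=> k _; rewrite sqr_ge0.
apply/negP=> /eqP/psumr_eq0P H; apply/negP: un0; rewrite negbK; apply/eqP/rowP => k.
rewrite mxE; apply/eqP; rewrite -sqrf_eq0; apply/eqP; apply: H => // i _.
exact: sqr_ge0.
Qed.

Lemma mulmx_tr_00 (R : realType) n (u : 'rV[R]_n) : \sum_k u 0 k * u^T k 0 = \sum_k u 0 k ^+ 2.
Proof. by apply: eq_bigr => k _; rewrite mxE expr2. Qed.

Lemma gram_pos (R : realType) j d (V : 'M[R]_(j,d)) : row_free V -> 0 < \det (V *m V^T).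
Proof.
move=> fV; set G := V *m V^T.
pose M t := 1%:M + t *: (G - 1%:M).
have Hnz : forall t, 0 <= t <= 1 -> \det (M t) != 0.
  move=> t /andP[t0 t1]; apply/negP => /det0P [w wn0 wM].
  have : (w *m M t *m w^T) 0 0 = 0 by rewrite wM mul0mx mxE.
  have -> : w *m M t *m w^T = (1 - t) *: (w *m w^T) + t *: ((w *m V) *m (w *m V)^T).
    rewrite /M /G mulmxDr mulmx1 -scalemxAr mulmxBr mulmx1 !mulmxDl -!scalemxAl mulmxBl.
    rewrite trmx_mul !mulmxA scalerBl scale1r scalerBr addrAC addrA.
    by [].
  set A1 := w *m w^T; set A2 := w *m V *m _; rewrite !mxE /A1 /A2 !mulmx_tr_00 => H.
  have Hw := sqsum_pos wn0.
  have Hu : 0 <= \sum_k (w *m V) 0 k ^+ 2 by apply: sumr_ge0 => k _; apply: sqr_ge0.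
  have [t_lt1 | t_eq1] := ltP t 1.
    have : 0 < (1 - t) * \sum_k w 0 k ^+ 2 by rewrite mulr_gt0 // subr_gt0.
    have : 0 <= t * \sum_k (w *m V) 0 k ^+ 2 by rewrite mulr_ge0.
    move: H; rewrite /GRing.scale /=. lra.
  have t1' : t = 1 by apply/eqP; rewrite eq_le t1.
  move: H; rewrite t1' subrr mul0r add0r mul1r => /eqP.
  rewrite eq_le => /andP[H _].
  have : w *m V != 0 by rewrite mulmx_free_eq0.
  move/sqsum_pos => H2; move: H; rewrite leNgt H2 //.
pose Mp : 'M[{poly R}]_j := \matrix_(a, b) (((1%:M : 'M[R]_j) a b)%:P + 'X * ((G - 1%:M) a b)%:P).
have HP : forall t, (\det Mp).[t] = \det (M t).
  move=> t; rewrite -horner_evalE -det_map_mx; congr (\det _); apply/matrixP => a b.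
  by rewrite !mxE rmorphD rmorphM /= !horner_evalE hornerX !hornerC.
rewrite ltNge; apply/negP => Hle.
have := @poly_ivt R (- \det Mp) 0 1 ler01.
rewrite !hornerN !HP /M scale0r addr0 det1 scale1r addrC subrK.
rewrite lerN10 oppr_ge0 Hle => /(_ isT) [t tin].
by rewrite /root hornerN HP oppr_eq0 (negbTE (Hnz t tin)).
Qed.


Lemma N_entry (R : realType) n (B0 : 'M[R]_n.+1) (a0 : 'cV[R]_n.+1) a b :
  ((1%:M - a0 *m delta_mx 0 ord0) *m B0 *m (1%:M - a0 *m delta_mx 0 ord0)^T) a b =
  (B0 a b - a0 a 0 * B0 ord0 b) - (B0 a ord0 - a0 a 0 * B0 ord0 ord0) * a0 b 0.
Proof.
rewrite mulmxBl mul1mx -mulmxA -rowE linearB /= trmx1 trmx_mul trmx_delta.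
rewrite mulmxBr mulmx1 mulmxA -colE.
by rewrite !mxE !big_ord1 !mxE !big_ord1 !mxE.
Qed.

Section CM.
Variables (R : realType) (d j : nat) (x : 'I_j.+1 -> 'rV[R]_d).
Local Notation B := (cm_matrix x).

Lemma cmE00 : B ord0 ord0 = 0.
Proof. by rewrite mxE unlift_none. Qed.
Lemma cmE0l t : B ord0 (lift ord0 t) = 1.
Proof. by rewrite mxE unlift_none liftK. Qed.
Lemma cmEl0 t : B (lift ord0 t) ord0 = 1.
Proof. by rewrite mxE unlift_none liftK. Qed.
Lemma cmEll s t : B (lift ord0 s) (lift ord0 t) = sqdist x s t.
Proof. by rewrite mxE !liftK. Qed.

Lemma sqdist_sym s t : sqdist x s t = sqdist x t s.
Proof. by apply: eq_bigr => k _; rewrite -sqrrN opprB. Qed.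
Lemma sqdist_id s : sqdist x s s = 0.
Proof. by rewrite /sqdist big1 // => k _; rewrite subrr expr0n. Qed.

Definition Vmx : 'M[R]_(j, d) := \matrix_(i < j) (x (lift ord0 i) - x ord0).

Definition al : 'cV[R]_j.+2 := \col_a (match unlift ord0 a with Some s => sqdist x s ord0 | None => 0 end).
Lemma al0 : al ord0 0 = 0. Proof. by rewrite mxE unlift_none. Qed.
Lemma alS s : al (lift ord0 s) 0 = sqdist x s ord0. Proof. by rewrite mxE liftK. Qed.
Definition e : 'rV[R]_j.+2 := delta_mx 0 ord0.
Lemma eE k : e 0 k = (ord0 == k)%:R. Proof. by rewrite mxE eqxx eq_sym. Qed.

Lemma cm_det : \det B = (-1) ^+ j.+1 * 2 ^+ j * \det (Vmx *m Vmx^T).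
Proof.
pose L := 1%:M - al *m e.
have detL : \det L = 1.
  rewrite det_trig.
    rewrite big1 // => i _; rewrite !mxE big_ord1 eE.
    case: (eqVneq (ord0 : 'I_j.+2) i) => [<-|ne]; first by rewrite al0 mul0r subr0 eqxx.
    by rewrite mulr0 subr0 eqxx.
  apply/forallP => a; apply/forallP => b; apply/implyP => ab.
  rewrite !mxE big_ord1 eE.
  have -> : (a == b) = false by apply/negbTE; rewrite neq_ltn ab.
  have -> : (ord0 == b) = false by apply/negbTE; rewrite neq_ltn /= (leq_ltn_trans _ ab).
  by rewrite mulr0 subr0.
pose N := L *m B *m L^T.
have detN : \det N = \det B by rewrite !det_mulmx det_tr detL mul1r mulr1.
have NE a b : N a b = (B a b - al a 0 * B ord0 b) - (B a ord0 - al a 0 * B ord0 ord0) * al b 0.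
  by rewrite /N /L /e N_entry.
clearbody N.
have d00 := sqdist_id ord0.
have i1E : lift (lift ord0 ord0) ord0 = ord0 :> 'I_j.+2 by apply: val_inj.
have i2E i : lift (lift ord0 ord0) (lift ord0 i) = lift ord0 (lift ord0 i) :> 'I_j.+2 by apply: val_inj.
rewrite -detN (expand_det_row _ (lift ord0 ord0)) big_ord_recl big1; last first.
  move=> t _; rewrite NE !cmEll cmEl0 cmE0l cmE00 !alS d00 sqdist_sym.
  by rewrite !mul0r !subr0 mul1r subrr mul0r.
rewrite NE cmEl0 cmE00 alS al0 d00 !mul0r !subr0 mul1r addr0.
rewrite /cofactor (expand_det_col _ ord0) big_ord_recl big1; last first.
  move=> i _; rewrite !mxE i2E NE cmEll cmEl0 cmE0l cmE00 !alS d00.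
  by rewrite mulr1 subrr mulr0 subr0 mul0r.
rewrite !mxE i1E NE cmE0l cmE00 al0 alS d00 !mul0r !subr0 mulr0 subr0 mul1r addr0.
rewrite /cofactor.
have -> : row' ord0 (col' ord0 (row' (lift ord0 ord0) (col' ord0 N))) = (-2) *: (Vmx *m Vmx^T).
  apply/matrixP => a b; rewrite !mxE i2E NE !cmEll !cmEl0 cmE0l cmE00 !alS.
  rewrite mulr1 mulr0 subr0 mul1r /sqdist -!sumrB mulr_sumr; apply: eq_bigr => k _.
  rewrite !mxE. ring.
rewrite detZ /= expr0 !mul1r expr1 exprS.
have -> : (-2 : R) ^+ j = (-1) ^+ j * 2 ^+ j by rewrite -exprMn mulN1r.
ring.
Qed.
End CM.


Section Gen.
Variables (R : realType) (V : normedModType R).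

Lemma is_diff_sum_seq (I : Type) (r : seq I) (F dF : I -> V -> R) a :
  (forall i, is_diff a (F i) (dF i)) ->
  is_diff a (fun y => \sum_(i <- r) F i y) (fun v => \sum_(i <- r) dF i v).
Proof.
move=> H; elim: r => [|i r IH].
  have -> : (fun y => \sum_(i <- [::]) F i y) = cst 0 by apply/funext => y; rewrite big_nil.
  apply: (is_diff_eq (is_diff_cst (0:R) a)).
  by apply/funext => v; rewrite big_nil.
have -> : (fun y => \sum_(i0 <- i :: r) F i0 y) = F i + (fun y => \sum_(i <- r) F i y).
  by apply/funext => y; rewrite big_cons.
apply: (is_diff_eq (is_diffD (H i) IH)).
by apply/funext => v; rewrite big_cons.
Qed.

Lemma is_diff_prod n (F dF : 'I_n -> V -> R) a :
  (forall i, is_diff a (F i) (dF i)) ->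
  is_diff a (fun y => \prod_i F i y)
    (fun v => \sum_i (\prod_(k | k != i) F k a) * dF i v).
Proof.
elim: n F dF => [|n IH] F dF H.
  have -> : (fun y => \prod_(i < 0) F i y) = cst 1 by apply/funext => y; rewrite big_ord0.
  apply: (is_diff_eq (is_diff_cst (1:R) a)).
  by apply/funext => v; rewrite big_ord0.
have -> : (fun y => \prod_(i < n.+1) F i y) = F ord0 * (fun y => \prod_(i < n) F (lift ord0 i) y).
  by apply/funext => y; rewrite big_ord_recl.
have IH' := IH (fun i => F (lift ord0 i)) (fun i => dF (lift ord0 i)) (fun i => H _).
apply: (is_diff_eq (is_diffM (H ord0) IH')).
apply/funext => v; rewrite big_ord_recl /=.
rewrite [in RHS]big_mkcond [in RHS]big_ord_recl /= mul1r.
rewrite !fctE addrC /GRing.scale /=; congr (_ + _).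
rewrite mulr_sumr; apply: eq_bigr => i _.
rewrite [in RHS]big_mkcond big_ord_recl /= mulrA; congr (_ * _ * _).
rewrite big_mkcond; apply: eq_bigr => k _.
by rewrite (inj_eq (@lift_inj _ ord0)).
Qed.

Lemma is_diff_det n (M : V -> 'M[R]_n) (dM : 'I_n -> 'I_n -> V -> R) a :
  (forall i k, is_diff a (fun y => M y i k) (dM i k)) ->
  is_diff a (fun y => \det (M y))
    (fun v => \sum_i \sum_l dM i l v * cofactor (M a) i l).
Proof.
move=> H.
have -> : (fun y => \det (M y)) =
  (fun y => \sum_(s <- index_enum {perm 'I_n}) ((-1) ^+ s * \prod_i M y i (s i))).
  by apply/funext => y.
have Hs : forall s : 'S_n, is_diff a (fun y => (-1) ^+ s * \prod_i M y i (s i))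
    (fun v => (-1) ^+ s * \sum_i (\prod_(k | k != i) M a k (s k)) * dM i (s i) v).
  move=> s.
  have -> : (fun y => (-1) ^+ s * \prod_i M y i (s i)) = (-1) ^+ s *: (fun y => \prod_i M y i (s i)) by [].
  apply: is_diff_eq; first exact: (is_diffZ ((-1) ^+ s) (@is_diff_prod _ (fun i y => M y i (s i)) (fun i => dM i (s i)) a (fun i => H i (s i)))).
  by [].
apply: (is_diff_eq (is_diff_sum_seq (index_enum _) Hs)).
apply/funext => v.
under eq_bigr => s _ do rewrite mulr_sumr.
rewrite exchange_big /=; apply: eq_bigr => i _.
under [RHS]eq_bigr => l _ do rewrite expand_cofactor mulr_sumr.
rewrite (partition_big (fun s : 'S_n => s i) predT) //=.
apply: eq_bigr => l _; apply: eq_big => [s|s /eqP <-] //.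
rewrite [RHS]mulrC -mulrA; congr (_ * (_ * _)).
by apply: eq_bigl => k; rewrite eq_sym.
Qed.

End Gen.


Lemma is_diff_coord (R : realType) d (k : 'I_d) (a : 'rV[R]_d) :
  is_diff a (fun y : 'rV[R]_d => y 0 k) (fun v => v 0 k).
Proof.
have @f : {linear 'rV[R]_d -> R}.
  by exists (fun N : 'rV[R]_d => N 0 k); do 2![eexists]; do ?[constructor];
     rewrite ?mxE// => ? *; rewrite ?mxE//; move=> ?; rewrite !mxE.
rewrite (_ : (fun _ => _) = f) //.
have fc : continuous f by exact: coord_continuous.
apply: DiffDef; first exact: linear_differentiable.
exact: diff_lin.
Qed.

Lemma is_diff_sqrt (R : realType) (s : R) : 0 < s ->
  is_diff s (@Num.sqrt R) (fun h => h * (2 * Num.sqrt s)^-1).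
Proof.
move=> s0; have D := is_derive1_sqrt s0.
have df : differentiable (@Num.sqrt R) s by apply/derivable1_diffP; exact: ex_derive.
apply: DiffDef => //; rewrite diff1E // derive1E derive_val.
by apply/funext => h.
Qed.


Section Entries.
Variables (R : realType) (d j : nat) (x : 'I_j.+1 -> 'rV[R]_d) (p : 'I_j.+1).

Definition dc (s : 'I_j.+1) (k : 'I_d) (v : 'rV[R]_d) : R := if s == p then v 0 k else 0.

Lemma is_diff_cc a s k : is_diff a (fun y => upd_vertex x p y s 0 k) (dc s k).
Proof.
rewrite /upd_vertex /dc; case: (s == p); first exact: is_diff_coord.
exact: (is_diff_eq (is_diff_cst (x s 0 k) a)).
Qed.

Definition dsq a s t (v : 'rV[R]_d) : R :=
  \sum_k 2 * (upd_vertex x p a s 0 k - upd_vertex x p a t 0 k) * (dc s k v - dc t k v).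

Lemma is_diff_sq a s t : is_diff a (fun y => sqdist (upd_vertex x p y) s t) (dsq a s t).
Proof.
rewrite /sqdist /dsq.
apply: (is_diff_sum_seq (index_enum _)) => k.
set g := fun y => upd_vertex x p y s 0 k - upd_vertex x p y t 0 k.
have Hg : is_diff a g (dc s k - dc t k) := is_diffB (is_diff_cc a s k) (is_diff_cc a t k).
have -> : (fun y => (upd_vertex x p y s 0 k - upd_vertex x p y t 0 k) ^+ 2) = g * g.
  by apply/funext => y; rewrite expr2.
apply: (is_diff_eq (is_diffM Hg Hg)); apply/funext => v.
rewrite !fctE /GRing.scale /= /g; ring.
Qed.

Definition dCM a (a' b' : 'I_j.+2) (v : 'rV[R]_d) : R :=
  match unlift ord0 a', unlift ord0 b' with
  | Some s, Some t => dsq a s t v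
  | _, _ => 0
  end.

Lemma is_diff_cm a a' b' : is_diff a (fun y => cm_matrix (upd_vertex x p y) a' b') (dCM a a' b').
Proof.
rewrite /dCM.
have -> : (fun y => cm_matrix (upd_vertex x p y) a' b') = fun y =>
    match unlift ord0 a', unlift ord0 b' with
    | Some s, Some t => sqdist (upd_vertex x p y) s t
    | None, None => 0
    | _, _ => 1
    end by apply/funext => y; rewrite mxE.
case: (unlift ord0 a') => [s|]; case: (unlift ord0 b') => [t|].
- exact: is_diff_sq.
- exact: (is_diff_eq (is_diff_cst (1:R) a)).
- exact: (is_diff_eq (is_diff_cst (1:R) a)).
- exact: (is_diff_eq (is_diff_cst (0:R) a)).
Qed.
End Entries.


Lemma sum_delta (R : realType) n (q : 'I_n) (F : 'I_n -> R) :
  \sum_i (i == q)%:R * F i = F q.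
Proof.
rewrite (bigD1 q) //= eqxx mul1r big1 ?addr0 // => i /negbTE ->; exact: mul0r.
Qed.

Unset Implicit Arguments.
Theorem lemma1 (R : realType) (d j : nat) (x : 'I_j.+1 -> 'rV[R]_d) (p : 'I_j.+1) :
  (1 <= j)%N -> (j <= d)%N -> affinely_independent x ->
  let f := fun y : 'rV[R]_d => gamma_cdf (upd_vertex x p y) in
  let grad : 'rV[R]_d :=
    ((-1) ^+ j.+1 / 2 ^+ j) / gamma_cdf x *:
      \sum_(m < j.+1 | m != p)
        (\adj (cm_matrix x) (lift ord0 p) (lift ord0 m) *: (2 *: (x p - x m))) in
  differentiable f (x p) /\
  forall v : 'rV[R]_d, 'd f (x p) v = \sum_(k < d) v 0 k * grad 0 k.
Proof.
move=> _ _ aff f grad.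
set B := cm_matrix x.
set c1 : R := (j`!)%:R.
set kap : R := (-1) ^+ j.+1 / (2 ^+ j * c1 ^+ 2).
pose g := fun y => \det (cm_matrix (upd_vertex x p y)).
have upd_id : upd_vertex x p (x p) = x.
  by apply/funext => s; rewrite /upd_vertex; case: eqP => // ->.
have Hg : is_diff (x p) g (fun v => \sum_i \sum_l dCM x p (x p) i l v * cofactor B i l).
  have := @is_diff_det R _ _ (fun y => cm_matrix (upd_vertex x p y)) _ (x p) (fun i k => is_diff_cm x p (x p) i k).
  by rewrite upd_id.
have c1n0 : c1 != 0 by rewrite pnatr_eq0 -lt0n fact_gt0.
have pos : 0 < kap * \det B.
  have ee : (-1) ^+ j.+1 * (-1) ^+ j.+1 = 1 :> R.
    by rewrite -exprD -signr_odd oddD addbb expr0.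
  have -> : kap * \det B = \det (Vmx x *m (Vmx x)^T) / c1 ^+ 2.
    rewrite /B cm_det /kap mulrA.
    have h2 : (2 : R) ^+ j != 0 by rewrite expf_neq0 // pnatr_eq0.
    transitivity ((-1) ^+ j.+1 * (-1) ^+ j.+1 * (2 ^+ j / (2 ^+ j * c1 ^+ 2)) * \det (Vmx x *m (Vmx x)^T)).
      by field; apply/andP; split.
    by rewrite ee mul1r; field; apply/andP; split.
  apply: divr_gt0; first exact: gram_pos.
  by rewrite exprn_gt0 // ltr0n fact_gt0.
have gx : g (x p) = \det B by rewrite /g upd_id.
have Hk := is_diffZ kap Hg.
have Hs : is_diff ((kap *: g) (x p)) (c1 *: (@Num.sqrt R))
    (c1 *: (fun h => h * (2 * Num.sqrt (kap * \det B))^-1)).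
  have -> : (kap *: g) (x p) = kap * \det B by rewrite -gx.
  exact: (is_diffZ c1 (is_diff_sqrt pos)).
have Hf0 := is_diff_comp Hk Hs.
have Ef : f = (c1 *: (@Num.sqrt R)) \o (kap *: g) by apply/funext => y.
rewrite Ef; split; first exact: ex_diff.
move=> v; rewrite diff_val /= !fctE /GRing.scale /=.
set DG := \sum_(i < j.+2) _.
pose T m := \sum_(k < d) 2 * (x p 0 k - x m 0 k) * v 0 k.
have RHS : \sum_(k < d) v 0 k * grad 0 k =
   ((-1) ^+ j.+1 / 2 ^+ j) / gamma_cdf x * \sum_(m < j.+1 | m != p) cofactor B (lift ord0 m) (lift ord0 p) * T m.
  rewrite /grad.
  under eq_bigr => k _ do rewrite !mxE summxE.
  under eq_bigr => k _ do under eq_bigr => m _ do rewrite !mxE.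
  under eq_bigr => k _ do rewrite mulrCA mulr_sumr.
  rewrite -mulr_sumr; congr (_ * _); rewrite exchange_big; apply: eq_bigr => m _.
  rewrite /T mulr_sumr; apply: eq_bigr => k _; ring.
have DGE : DG = 2 * \sum_(m < j.+1 | m != p) cofactor B (lift ord0 m) (lift ord0 p) * T m.
  have BT : B^T = B.
    apply/matrixP => a b; rewrite !mxE.
    by case: (unlift ord0 a) => [s|]; case: (unlift ord0 b) => [t|] //; rewrite sqdist_sym.
  have cofS a b : cofactor B a b = cofactor B b a by rewrite -{1}BT cofactor_tr.
  pose S s t := \sum_(k < d) 2 * (x s 0 k - x t 0 k) * v 0 k.
  have SN s t : S t s = - S s t.
    by rewrite /S -sumrN; apply: eq_bigr => k _; ring.
  have dsqE s t : dsq x p (x p) s t v = ((s == p)%:R - (t == p)%:R) * S s t.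
    rewrite /dsq upd_id /S mulr_sumr; apply: eq_bigr => k _; rewrite /dc.
    by case: (s == p); case: (t == p) => /=; ring.
  rewrite /DG big_ord_recl big1 ?add0r; last by move=> l _; rewrite /dCM unlift_none mul0r.
  under eq_bigr => s _ do (rewrite big_ord_recl /dCM liftK unlift_none mul0r add0r;
     under eq_bigr => t _ do rewrite !liftK dsqE mulrBl mulrBl).
  under eq_bigr => s _ do (under eq_bigr => t _ do rewrite -!mulrA; rewrite sumrB sum_delta -mulr_sumr).
  rewrite sumrB sum_delta.
  under [X in _ - X]eq_bigr => s _ do rewrite SN mulNr cofS.
  rewrite sumrN opprK -big_split /= (bigD1 p) //=.
  have Spp : S p p = 0 by rewrite /S big1 // => k _; rewrite subrr mulr0 mul0r.
  rewrite Spp !mul0r !add0r mulr_sumr; apply: eq_bigr => m _; rewrite cofS /T /S; ring.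
rewrite RHS DGE (_ : gamma_cdf x = c1 * Num.sqrt (kap * \det B)) //.
have q0 : 0 < Num.sqrt (kap * \det B) by rewrite sqrtr_gt0.
move: q0; set q := Num.sqrt _; set S := \sum_(m < j.+1 | m != p) _ => q0.
have h2 : (2 : R) ^+ j != 0 by rewrite expf_neq0 // pnatr_eq0.
rewrite /kap; field; apply/and3P; split => //; exact: lt0r_neq0.
Qed.
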